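(* Let $L=\langle S,A,\to\rangle$ be a labelled transition system and $x,y\in\{o,b\}$. Then $\mathrel{\underline{\leftrightarrow}}_{(x,y)}$ has the stuttering property: whenever $t_0\xrightarrow{\tau}t_1\xrightarrow{\tau}\cdots\xrightarrow{\tau}t_k$ with $t_0\mathrel{\underline{\leftrightarrow}}_{(x,y)}t_k$, then $t_i\mathrel{\underline{\leftrightarrow}}_{(x,y)}t_j$ for all $0\le i,j\le k$.
   Context: An LTS is $\langle S,A,\to\rangle$ with states $S$, actions $A$ containing the internal action $\tau$, and $\to\subseteq S\times A\times S$; write $s\xrightarrow{a}t$, and $\twoheadrightarrow$ for the reflexive-transitive closure of $\xrightarrow{\tau}$. For $R\subseteq S\times S$ and $s,s',t$: $s\twoheadrightarrow_{o,R,t}s'$ iff $s\twoheadrightarrow s'$; $s\twoheadrightarrow_{b,R,t}s'$ iff $s\twoheadrightarrow s'$, $t\,R\,s$ and $t\,R\,s'$. For $x,y\in\{o,b\}$, a symmetric $R$ is an $(x,y)$-generic bisimulation if whenever $s\,R\,t$ and $s\xrightarrow{a}s'$, either $a=\tau$ and $s'\,R\,t$, or there exist $t',t_1,t_2$ with $t\twoheadrightarrow_{x,R,s}t_1\xrightarrow{a}t_2\twoheadrightarrow_{y,R,s'}t'$ and $s'\,R\,t'$. $s\mathrel{\underline{\leftrightarrow}}_{(x,y)}t$ iff some $(x,y)$-generic bisimulation relates $s$ and $t$. *)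

(* Defs.v *)
From Stdlib Require Import Relations.

Record LTS := {
  St : Type;
  Act : Type;
  tau : Act;
  step : St -> Act -> St -> Prop
}.

Definition tau_star (L : LTS) : St L -> St L -> Prop :=
  clos_refl_trans (St L) (fun s s' => step L s (tau L) s').

Inductive xy := o | b.

Definition gen_tau (L : LTS) (x : xy) (R : St L -> St L -> Prop)
  (t s s' : St L) : Prop :=
  match x with
  | o => tau_star L s s'
  | b => tau_star L s s' /\ R t s /\ R t s'
  end.

Definition symmetric_rel {T : Type} (R : T -> T -> Prop) : Prop :=
  forall s t, R s t -> R t s.

Definition generic_bisim (L : LTS) (x y : xy) (R : St L -> St L -> Prop) : Prop :=
  symmetric_rel R /\
  forall s t a s', R s t -> step L s a s' ->
    (a = tau L /\ R s' t) \/
    exists t' t1 t2,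
      gen_tau L x R s t t1 /\ step L t1 a t2 /\ gen_tau L y R s' t2 t' /\ R s' t'.

Definition bisimilar (L : LTS) (x y : xy) (s t : St L) : Prop :=
  exists R, generic_bisim L x y R /\ R s t.

(* Main.v *)
Require Import Defs.
From Stdlib Require Import Relations Lia Arith.

Definition stepw (L : LTS) (t1 : St L) (a : Act L) (t2 : St L) : Prop :=
  step L t1 a t2 \/ (a = tau L /\ t1 = t2).

Definition semi (L : LTS) (x y : xy) (R : St L -> St L -> Prop) : Prop :=
  symmetric_rel R /\
  forall s t a s', R s t -> step L s a s' ->
    exists t1 t2 t', gen_tau L x R s t t1 /\ stepw L t1 a t2 /\
      gen_tau L y R s' t2 t' /\ R s' t'.

Definition SB (L : LTS) (x y : xy) (s t : St L) : Prop :=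
  exists R, semi L x y R /\ R s t.

Lemma gen_tau_mono (L : LTS) (x : xy) (R R' : St L -> St L -> Prop) t s s' :
  (forall a b, R a b -> R' a b) -> gen_tau L x R t s s' -> gen_tau L x R' t s s'.
Proof. destruct x; simpl; intuition. Qed.

Lemma gen_tau_star (L : LTS) (x : xy) (R : St L -> St L -> Prop) t s s' :
  gen_tau L x R t s s' -> tau_star L s s'.
Proof. destruct x; simpl; tauto. Qed.

Lemma SB_semi L x y : semi L x y (SB L x y).
Proof.
  split.
  - intros s t [R [HR H]]. exists R. split; [exact HR | apply (proj1 HR); exact H].
  - intros s t a s' [R [HR H]] Hst.
    destruct (proj2 HR _ _ _ _ H Hst) as (t1&t2&t'&H1&H2&H3&H4).
    assert (M : forall a b, R a b -> SB L x y a b)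
      by (intros a0 b0 Hab; exists R; split; assumption).
    exists t1, t2, t'. split; [eapply gen_tau_mono; eauto|].
    split; [exact H2|]. split; [eapply gen_tau_mono; eauto| auto].
Qed.

Lemma SB_sym L x y s t : SB L x y s t -> SB L x y t s.
Proof. intro H. apply (proj1 (SB_semi L x y)). exact H. Qed.

Lemma strict_semi L x y R : generic_bisim L x y R -> semi L x y R.
Proof.
  intros [Hs HR]. split; [exact Hs|].
  intros s t a s' H Hst.
  destruct (HR _ _ _ _ H Hst) as [[Ha H2] | (t'&t1&t2&G1&G2&G3&G4)].
  - exists t, t, t. split; [destruct x; simpl; repeat split; auto; apply rt_refl|].
    split; [right; auto|]. split; [destruct y; simpl; repeat split; auto; apply rt_refl| auto].
  - exists t1, t2, t'. split; [auto|]. split; [left; auto|]. auto.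
Qed.

Lemma SB_refl L x y s : SB L x y s s.
Proof.
  exists eq. split; [|reflexivity]. split.
  - intros a b H; symmetry; exact H.
  - intros s0 t a s' H Hst. subst t. exists s0, s', s'.
    split; [destruct x; simpl; repeat split; auto; apply rt_refl|].
    split; [left; auto|]. split; [destruct y; simpl; repeat split; auto; apply rt_refl| auto].
Qed.

Lemma PT L x y R : semi L x y R -> forall u u1, tau_star L u u1 ->
  forall t, R u t -> exists t1, tau_star L t t1 /\ R u1 t1.
Proof.
  intros HR u u1 H. unfold tau_star in H. induction H; intros t Hut.
  - destruct (proj2 HR _ _ _ _ Hut H) as (t1&t2&t'&H1&H2&H3&H4).
    exists t'. split; [|exact H4].
    apply rt_trans with t1; [eapply gen_tau_star; eauto|].
    apply rt_trans with t2; [|eapply gen_tau_star; eauto].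
    destruct H2 as [H2|[Ha Heq]]; [subst; apply rt_step; auto | subst; apply rt_refl].
  - exists t. split; [apply rt_refl|exact Hut].
  - destruct (IHclos_refl_trans1 t Hut) as (m&Hm1&Hm2).
    destruct (IHclos_refl_trans2 m Hm2) as (m'&Hm'1&Hm'2).
    exists m'. split; [eapply rt_trans; eauto|exact Hm'2].
Qed.

Lemma semi_stepw L x y R s t a s' : semi L x y R -> R s t -> stepw L s a s' ->
  exists t1 t2 t', gen_tau L x R s t t1 /\ stepw L t1 a t2 /\
      gen_tau L y R s' t2 t' /\ R s' t'.
Proof.
  intros HR H [Hs | [Ha Heq]].
  - apply (proj2 HR); auto.
  - subst s'. exists t, t, t.
    split; [destruct x; simpl; repeat split; auto; apply rt_refl|].
    split; [right; auto|]. split; [destruct y; simpl; repeat split; auto; apply rt_refl| auto].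
Qed.

Lemma SB_trans L x y s u t : SB L x y s u -> SB L x y u t -> SB L x y s t.
Proof.
  intros Hsu Hut.
  set (S := SB L x y).
  set (C := fun p q => exists m, S p m /\ S m q).
  exists C. split; [|exists u; split; assumption].
  split.
  - intros p q [m [H1 H2]]. exists m. split; apply SB_sym; assumption.
  - clear s u t Hsu Hut. intros s t a s' [u [Hsu Hut]] Hst.
    destruct (proj2 (SB_semi L x y) _ _ _ _ Hsu Hst) as (u1&u2&u'&G1&G2&G3&G4).
    destruct (PT L x y S (SB_semi L x y) u u1 (gen_tau_star _ _ _ _ _ _ G1) t Hut)
      as (w&Hw1&Hw2).
    destruct (semi_stepw L x y S u1 w a u2 (SB_semi L x y) Hw2 G2)
      as (w1&w2&w'&H1&H2&H3&H4).
    destruct (PT L x y S (SB_semi L x y) u2 u' (gen_tau_star _ _ _ _ _ _ G3) w' H4)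
      as (T&HT1&HT2).
    exists w1, w2, T. split; [|split; [exact H2|split]].
    + destruct x; simpl in *.
      * eapply rt_trans; eauto.
      * destruct G1 as (_&_&G1b). destruct H1 as (H1a&_&H1b).
        split; [eapply rt_trans; eauto|]. split; [exists u; auto| exists u1; auto].
    + destruct y; simpl in *.
      * eapply rt_trans; eauto.
      * destruct G3 as (_&G3b&_). destruct H3 as (H3a&H3b&_).
        split; [eapply rt_trans; eauto|]. split; [exists u2; auto| exists u'; auto].
    + exists u'; auto.
Qed.

Lemma SB_stutter L x y a c v : SB L x y a c -> tau_star L a v -> tau_star L v c ->
  SB L x y v c.
Proof.
  intros Hac Hav Hvc.
  set (S := SB L x y).
  set (R' := fun p q => S p q \/ (exists w, tau_star L a w /\ tau_star L w c /\
            ((p = w /\ S q c) \/ (q = w /\ S p c)))).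
  exists R'. split.
  2:{ right. exists v. split; [auto|split; [auto|left; split; [auto|apply SB_refl]]]. }
  assert (M : forall p q, S p q -> R' p q) by (intros; left; auto).
  split.
  - intros p q [H | (w&H1&H2&[[E H3]|[E H3]])].
    + left. apply SB_sym; auto.
    + right. exists w. split; [auto|split; [auto|right; auto]].
    + right. exists w. split; [auto|split; [auto|left; auto]].
  - clear v Hav Hvc. intros s t b s' H Hst.
    destruct H as [H | (w&Haw&Hwc&[[E H3]|[E H3]])].
    + destruct (proj2 (SB_semi L x y) _ _ _ _ H Hst) as (t1&t2&t'&H1&H2&H3&H4).
      exists t1, t2, t'. split; [eapply gen_tau_mono; eauto|].
      split; [exact H2|]. split; [eapply gen_tau_mono; eauto| auto].
    + subst s.
      assert (Hat : S a t) by (eapply SB_trans; [exact Hac| apply SB_sym; exact H3]).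
      destruct (PT L x y S (SB_semi L x y) a w Haw t Hat) as (m&Hm1&Hm2).
      destruct (proj2 (SB_semi L x y) _ _ _ _ Hm2 Hst) as (t1&t2&t'&H1&H2&H4&H5).
      exists t1, t2, t'. split; [|split; [exact H2|split; [eapply gen_tau_mono; eauto|auto]]].
      destruct x; simpl in *.
      * eapply rt_trans; eauto.
      * destruct H1 as (H1a&_&H1b). split; [eapply rt_trans; eauto|].
        split; [right; exists w; split; [auto|split; [auto|left; auto]] | left; auto].
    + subst t.
      destruct (proj2 (SB_semi L x y) _ _ _ _ H3 Hst) as (t1&t2&t'&H1&H2&H4&H5).
      exists t1, t2, t'. split; [|split; [exact H2|split; [eapply gen_tau_mono; eauto|auto]]].
      destruct x; simpl in *.
      * eapply rt_trans; eauto.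
      * destruct H1 as (H1a&_&H1b). split; [eapply rt_trans; eauto|].
        split; [right; exists w; split; [auto|split; [auto|right; auto]] | left; auto].
Qed.

Lemma rt_last L (p q : St L) : tau_star L p q ->
  p = q \/ exists v, tau_star L p v /\ step L v (tau L) q.
Proof.
  intro H. apply clos_rt_rtn1 in H. destruct H as [|v0 q0 H1 H2].
  - left; auto.
  - right. exists v0. split; [apply clos_rtn1_rt; auto| auto].
Qed.

Lemma rt_first L (p q : St L) : tau_star L p q ->
  p = q \/ exists v, step L p (tau L) v /\ tau_star L v q.
Proof.
  intro H. apply clos_rt_rt1n in H. destruct H as [|v0 q0 H1 H2].
  - left; auto.
  - right. exists v0. split; [auto|apply clos_rt1n_rt; auto].
Qed.

Lemma SB_strict L x y : generic_bisim L x y (SB L x y).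
Proof.
  split; [exact (proj1 (SB_semi L x y))|].
  intros s t a s' H Hst.
  destruct (proj2 (SB_semi L x y) _ _ _ _ H Hst) as (t1&t2&t'&G1&G2&G3&G4).
  destruct G2 as [G2 | [Ha E]].
  - right. exists t', t1, t2. auto.
  - subst t2. subst a.
    destruct (rt_last L t t1 (gen_tau_star _ _ _ _ _ _ G1)) as [E | (v&Hv1&Hv2)].
    + subst t1.
      destruct (rt_first L t t' (gen_tau_star _ _ _ _ _ _ G3)) as [E | (v&Hv1&Hv2)].
      * subst t'. left; auto.
      * right. exists t', t, v. split; [|split; [auto|split; [|auto]]].
        -- destruct x; simpl in *; [apply rt_refl|]. destruct G1 as (_&G1&_).
           split; [apply rt_refl|auto].
        -- destruct y; simpl in *; [auto|]. destruct G3 as (_&G3a&G3b).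
           split; [auto|split; [|auto]].
           pose proof (SB_trans _ _ _ _ _ _ (SB_sym _ _ _ _ _ G3a) G3b) as Htt.
           pose proof (SB_stutter _ _ _ _ _ _ Htt (rt_step _ _ _ _ Hv1) Hv2) as Hv.
           eapply SB_trans; [exact G3b| apply SB_sym; exact Hv].
    + right. exists t', v, t1. split; [|split; [auto|split; auto]].
      destruct x; simpl in *; [auto|]. destruct G1 as (G1t&G1a&G1b).
      split; [auto|split; [auto|]].
      pose proof (SB_trans _ _ _ _ _ _ (SB_sym _ _ _ _ _ G1a) G1b) as Htt.
      pose proof (SB_stutter _ _ _ _ _ _ Htt Hv1 (rt_step _ _ _ _ Hv2)) as Hv.
      eapply SB_trans; [exact G1b| apply SB_sym; exact Hv].
Qed.

Theorem lemma4p8 (L : LTS) (x y : xy) (k : nat) (t : nat -> St L) :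
  (forall i, i < k -> step L (t i) (tau L) (t (S i))) ->
  bisimilar L x y (t 0) (t k) ->
  forall i j, i <= k -> j <= k -> bisimilar L x y (t i) (t j).
Proof.
  intros Hstep [R [HR Hr]] i j Hi Hj.
  assert (H0k : SB L x y (t 0) (t k)) by (exists R; split; [apply strict_semi; auto| auto]).
  assert (Hch : forall m n, n <= m -> m <= k -> tau_star L (t n) (t m)).
  { induction m; intros n Hn Hm.
    - assert (n = 0) by lia. subst; apply rt_refl.
    - destruct (Nat.eq_dec n (S m)) as [E|E].
      + subst; apply rt_refl.
      + apply rt_trans with (t m); [apply IHm; lia|]. apply rt_step. apply Hstep. lia. }
  assert (Hik : SB L x y (t i) (t k)) by (eapply SB_stutter; [exact H0k| apply Hch; lia| apply Hch; lia]).
  assert (Hjk : SB L x y (t j) (t k)) by (eapply SB_stutter; [exact H0k| apply Hch; lia| apply Hch; lia]).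
  exists (SB L x y). split; [apply SB_strict|].
  eapply SB_trans; [exact Hik| apply SB_sym; exact Hjk].
Qed.
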